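(* Let $\phi_1,\phi_2\in D=\{z\in\mathbb{C};|z|<1\}$ and let $Z$ be a random variable on $\partial D=\{z\in\mathbb{C};|z|=1\}$ with density, with respect to arc length, $$f(z)=\frac{1}{2\pi}\frac{|1-\phi_1\overline{\phi_2}|^2}{1-|\phi_1\overline{\phi_2}|^2}\frac{1-|\phi_1|^2}{|z-\phi_1|^2}\frac{1-|\phi_2|^2}{|z-\phi_2|^2},\qquad z\in\partial D.$$ Then for every nonnegative integer $n$ (the $n$th trigonometric moment), $$E(Z^n)=\begin{cases}\dfrac{(1-|\phi_2|^2)(1-\overline{\phi_1}\phi_2)\phi_1^{n+1}-(1-|\phi_1|^2)(1-\phi_1\overline{\phi_2})\phi_2^{n+1}}{(\phi_1-\phi_2)(1-|\phi_1\overline{\phi_2}|^2)}, & \phi_1\ne\phi_2,\\[2ex] \dfrac{1+n+(1-n)|\phi_1|^2}{1+|\phi_1|^2}\phi_1^n, & \phi_1=\phi_2.\end{cases}$$ *)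

(* Defs.v *)
From Stdlib Require Export Reals.
From Coquelicot Require Export Coquelicot.

Open Scope C_scope.

(* The point e^{i theta} of the unit circle; theta in [0, 2 pi] is the arc-length parameter. *)
Definition circ (theta : R) : C := (cos theta, sin theta).

Definition dens (phi1 phi2 z : C) : R :=
  (/ (2 * PI) *
   ((Cmod (1 - phi1 * Cconj phi2)) ^ 2 / (1 - (Cmod (phi1 * Cconj phi2)) ^ 2)) *
   ((1 - (Cmod phi1) ^ 2) / (Cmod (z - phi1)) ^ 2) *
   ((1 - (Cmod phi2) ^ 2) / (Cmod (z - phi2)) ^ 2))%R.

(* Integrand of E(Z^n) = \int_{\partial D} z^n f(z) ds(z), parametrized by arc length. *)
Definition moment_integrand (phi1 phi2 : C) (n : nat) (theta : R) : C :=
  RtoC (dens phi1 phi2 (circ theta)) * (circ theta) ^ n.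

(* Main.v *)
Require Import Defs.
From Stdlib Require Import Lra Lia Psatz.
Open Scope C_scope.

Definition IC (f : R -> C) (v : C) :=
  is_RInt (V := C_R_CompleteNormedModule) f 0 (2 * PI) v.

Lemma norm_C (x : C) : @norm _ C_R_NormedModule x = Cmod x.
Proof. symmetry. exact (Cmod_norm x). Qed.

Lemma IC_ext f g v : (forall t, f t = g t) -> IC f v -> IC g v.
Proof. intros H. apply is_RInt_ext. intros; auto. Qed.

Lemma IC_eqv f v w : v = w -> IC f v -> IC f w.
Proof. intros ->; auto. Qed.

Lemma IC_plus f g v w : IC f v -> IC g w -> IC (fun t => f t + g t) (v + w).
Proof. intros H1 H2. exact (is_RInt_plus _ _ _ _ _ _ H1 H2). Qed.

Lemma IC_comp f v : IC f v ->
  is_RInt (fun t => fst (f t)) 0 (2*PI) (fst v) /\ is_RInt (fun t => snd (f t)) 0 (2*PI) (snd v).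
Proof. intros H. split.
  - exact (is_RInt_fct_extend_fst (U:=R_NormedModule) (V:=R_NormedModule) f _ _ v H).
  - exact (is_RInt_fct_extend_snd (U:=R_NormedModule) (V:=R_NormedModule) f _ _ v H).
Qed.

Lemma IC_pair f v : is_RInt (fun t => fst (f t)) 0 (2*PI) (fst v) ->
  is_RInt (fun t => snd (f t)) 0 (2*PI) (snd v) -> IC f v.
Proof. intros H1 H2. destruct v as [v1 v2].
  exact (is_RInt_fct_extend_pair (U:=R_NormedModule) (V:=R_NormedModule) f _ _ v1 v2 H1 H2). Qed.

Lemma IC_scal (c : C) f v : IC f v -> IC (fun t => c * f t) (c * v).
Proof. intros H. destruct (IC_comp f v H) as [H1 H2].
  apply IC_pair.
  - apply (is_RInt_ext (fun t => (fst c * fst (f t) - snd c * snd (f t))%R)).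
    + intros. reflexivity.
    + apply (is_RInt_minus (V:=R_NormedModule)); apply (is_RInt_scal (V:=R_NormedModule)); auto.
  - apply (is_RInt_ext (fun t => (fst c * snd (f t) + snd c * fst (f t))%R)).
    + intros. reflexivity.
    + apply (is_RInt_plus (V:=R_NormedModule)); apply (is_RInt_scal (V:=R_NormedModule)); auto.
Qed.

Lemma IC_const (c : C) : IC (fun _ => c) (RtoC (2*PI) * c).
Proof. eapply IC_eqv; [|apply is_RInt_const]. rewrite Rminus_0_r. rewrite scal_R_Cmult. reflexivity. Qed.

Definition Cont (f : R -> C) := forall t, continuous f t.

Lemma cont_pair (f : R -> C) t : continuous (fun t => fst (f t)) t ->
  continuous (fun t => snd (f t)) t -> continuous f t.
Proof. intros H1 H2. unfold continuous in *.
  apply filterlim_locally. intros eps.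
  apply (proj1 (filterlim_locally _ _)) with (eps:=eps) in H1.
  apply (proj1 (filterlim_locally _ _)) with (eps:=eps) in H2.
  generalize (filter_and _ _ H1 H2). apply filter_imp.
  intros x [Ha Hb]. split; auto.
Qed.

Lemma cont_fst (f : R -> C) t : continuous f t -> continuous (fun t => fst (f t)) t.
Proof. intros H. apply (continuous_comp f fst). auto. destruct (f t). apply continuous_fst. Qed.
Lemma cont_snd (f : R -> C) t : continuous f t -> continuous (fun t => snd (f t)) t.
Proof. intros H. apply (continuous_comp f snd). auto. destruct (f t). apply continuous_snd. Qed.

Lemma cont_plus f g : Cont f -> Cont g -> Cont (fun t => f t + g t).
Proof. intros H1 H2 t. exact (continuous_plus (V:=C_R_NormedModule) f g t (H1 t) (H2 t)). Qed.
Lemma cont_minus f g : Cont f -> Cont g -> Cont (fun t => f t - g t).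
Proof. intros H1 H2 t. exact (continuous_minus (V:=C_R_NormedModule) f g t (H1 t) (H2 t)). Qed.
Lemma cont_const c : Cont (fun _ => c).
Proof. intros t. apply continuous_const. Qed.

Lemma cont_mult f g : Cont f -> Cont g -> Cont (fun t => f t * g t).
Proof. intros H1 H2 t.
  pose proof (cont_fst f t (H1 t)) as F1. pose proof (cont_snd f t (H1 t)) as F2.
  pose proof (cont_fst g t (H2 t)) as G1. pose proof (cont_snd g t (H2 t)) as G2.
  apply cont_pair.
  - exact (continuous_minus (V:=R_NormedModule) _ _ t
       (continuous_mult (K:=R_AbsRing) _ _ t F1 G1) (continuous_mult (K:=R_AbsRing) _ _ t F2 G2)).
  - exact (continuous_plus (V:=R_NormedModule) _ _ t
       (continuous_mult (K:=R_AbsRing) _ _ t F1 G2) (continuous_mult (K:=R_AbsRing) _ _ t F2 G1)).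
Qed.

Lemma cont_inv f : Cont f -> (forall t, f t <> 0) -> Cont (fun t => / f t).
Proof. intros H Hn t.
  assert (Hd : (fst (f t) ^ 2 + snd (f t) ^ 2)%R <> 0%R).
  { intro E. apply (Hn t). apply Cmod_eq_0. unfold Cmod. rewrite E. apply sqrt_0. }
  pose proof (cont_fst f t (H t)) as F1. pose proof (cont_snd f t (H t)) as F2.
  assert (Hc : continuous (fun t => (fst (f t) ^ 2 + snd (f t) ^ 2)%R) t).
  { exact (continuous_plus (V:=R_NormedModule) _ _ t
       (continuous_mult (K:=R_AbsRing) _ _ t F1 (continuous_mult (K:=R_AbsRing) _ _ t F1 (continuous_const 1%R t)))
       (continuous_mult (K:=R_AbsRing) _ _ t F2 (continuous_mult (K:=R_AbsRing) _ _ t F2 (continuous_const 1%R t)))). }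
  pose proof (continuous_Rinv_comp _ t Hc Hd) as Hi.
  apply cont_pair.
  - exact (continuous_mult (K:=R_AbsRing) _ _ t F1 Hi).
  - exact (continuous_mult (K:=R_AbsRing) _ _ t (continuous_opp (V:=R_NormedModule) _ t F2) Hi).
Qed.

Lemma cont_pow f n : Cont f -> Cont (fun t => f t ^ n).
Proof. intros H. induction n; simpl. apply cont_const. apply cont_mult; auto. Qed.

Lemma cont_circ : Cont circ.
Proof. intros t. apply cont_pair; simpl. apply continuous_cos. apply continuous_sin. Qed.

Lemma cont_ex f : Cont f -> ex_RInt (V:=C_R_CompleteNormedModule) f 0 (2*PI).
Proof. intros H. apply ex_RInt_continuous. intros; apply H. Qed.

Lemma circ_mod t : Cmod (circ t) = 1%R.
Proof. unfold Cmod, circ; simpl fst; simpl snd.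
  replace (cos t ^ 2 + sin t ^ 2)%R with 1%R. apply sqrt_1.
  pose proof (sin2_cos2 t) as H. unfold Rsqr in H. simpl. lra. Qed.

Lemma circ_nz t : circ t <> 0.
Proof. intro E. pose proof (circ_mod t) as H. rewrite E, Cmod_0 in H. lra. Qed.

Lemma circ_mult s t : circ s * circ t = circ (s + t).
Proof. unfold Cmult, circ; simpl. rewrite cos_plus, sin_plus. f_equal; ring. Qed.

Lemma circ_pow t k : circ t ^ k = circ (INR k * t).
Proof. induction k; simpl Cpow.
  - unfold circ. rewrite Rmult_0_l, cos_0, sin_0. reflexivity.
  - rewrite IHk, circ_mult. f_equal. rewrite S_INR. ring. Qed.

Lemma circ_inv t : / circ t = circ (- t).
Proof. assert (H : circ t * circ (- t) = 1).
  { rewrite circ_mult. unfold circ. rewrite Rplus_opp_r, cos_0, sin_0. reflexivity. }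
  rewrite <- (Cmult_1_r (/ circ t)). rewrite <- H. rewrite Cmult_assoc.
  rewrite Cinv_l by apply circ_nz. apply Cmult_1_l. Qed.

Lemma is_RInt_eqv_R (f : R -> R) a b l l' : l = l' -> is_RInt f a b l -> is_RInt f a b l'.
Proof. intros ->; auto. Qed.

Lemma int_circ c : c <> 0%R -> sin (c * (2 * PI)) = 0%R -> cos (c * (2 * PI)) = 1%R ->
  IC (fun t => circ (c * t)) 0.
Proof. intros Hc Hs Hco. apply IC_pair; simpl.
  - assert (H := is_RInt_derive (V:=R_CompleteNormedModule) (fun t => sin (c * t) / c)%R (fun t => cos (c * t))%R 0 (2 * PI)).
    eapply is_RInt_eqv_R; [|apply H].
    + cbv beta. rewrite Hs, Rmult_0_r, sin_0. unfold minus, plus, opp; simpl. field. auto.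
    + intros x _. auto_derive. auto. field. auto.
    + intros x _. apply (continuous_comp (fun t => c * t)%R cos).
      apply (ex_derive_continuous (fun t => c * t)%R). auto_derive. auto.
      apply continuous_cos.
  - assert (H := is_RInt_derive (V:=R_CompleteNormedModule) (fun t => - cos (c * t) / c)%R (fun t => sin (c * t))%R 0 (2 * PI)).
    eapply is_RInt_eqv_R; [|apply H].
    + cbv beta. rewrite Hco, Rmult_0_r, cos_0. unfold minus, plus, opp; simpl. field. auto.
    + intros x _. auto_derive. auto. field. auto.
    + intros x _. apply (continuous_comp (fun t => c * t)%R sin).
      apply (ex_derive_continuous (fun t => c * t)%R). auto_derive. auto.
      apply continuous_sin.
Qed.

Lemma int_pos k : (1 <= k)%nat -> IC (fun t => circ t ^ k) 0.
Proof. intros Hk. apply IC_ext with (fun t => circ (INR k * t)).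
  intros; rewrite circ_pow; auto.
  apply int_circ.
  - apply not_0_INR. lia.
  - replace (INR k * (2 * PI))%R with (0 + 2 * INR k * PI)%R by ring.
    rewrite sin_period. apply sin_0.
  - replace (INR k * (2 * PI))%R with (0 + 2 * INR k * PI)%R by ring.
    rewrite cos_period. apply cos_0.
Qed.

Lemma int_neg k : (1 <= k)%nat -> IC (fun t => (/ circ t) ^ k) 0.
Proof. intros Hk. apply IC_ext with (fun t => circ (- INR k * t)).
  intros; rewrite circ_inv, circ_pow; f_equal; ring.
  apply int_circ.
  - intro E. apply (not_0_INR k). lia. lra.
  - replace (- INR k * (2 * PI))%R with (- (0 + 2 * INR k * PI))%R by ring.
    rewrite sin_neg, sin_period, sin_0. ring.
  - replace (- INR k * (2 * PI))%R with (- (0 + 2 * INR k * PI))%R by ring.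
    rewrite cos_neg, cos_period. apply cos_0.
Qed.

Definition good (e : R -> C) :=
  (forall t, Cmod (e t) = 1%R) /\ Cont e /\
  (forall m, (1 <= m)%nat -> IC (fun t => e t ^ m) 0) /\
  (forall m, (1 <= m)%nat -> IC (fun t => (/ e t) ^ m) 0).

Lemma small_zero x q c : (0 <= x)%R -> (0 <= q < 1)%R -> (forall N, x <= q ^ N * c)%R -> x = 0%R.
Proof. intros Hx Hq H. destruct (Rle_lt_or_eq_dec 0 x Hx) as [Hp|]; [|auto].
  exfalso. assert (Hc : (0 < c)%R). { specialize (H 0%nat). simpl in H. lra. }
  assert (Hy : (0 < x / c)%R). { apply Rdiv_lt_0_compat; auto. }
  destruct (pow_lt_1_zero q ltac:(rewrite Rabs_right; lra) (x / c)%R Hy) as [N HN].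
  specialize (HN N (le_n N)). rewrite Rabs_right in HN by (apply Rle_ge, pow_le; lra).
  specialize (H N). apply Rmult_lt_compat_r with (r := c) in HN; auto.
  unfold Rdiv in HN. rewrite Rmult_assoc, Rinv_l, Rmult_1_r in HN; lra. Qed.

Lemma IC_unique f v w : IC f v -> IC f w -> v = w.
Proof. intros H1 H2. rewrite <- (is_RInt_unique (V:=C_R_CompleteNormedModule) _ _ _ _ H1).
  exact (is_RInt_unique (V:=C_R_CompleteNormedModule) _ _ _ _ H2). Qed.

Lemma IC_bound f v M : (forall t, Cmod (f t) <= M)%R -> IC f v -> (Cmod v <= 2 * PI * M)%R.
Proof. intros Hb H. rewrite <- norm_C.
  replace (2 * PI * M)%R with ((2 * PI - 0) * M)%R by ring.
  apply (norm_RInt_le_const (V:=C_R_NormedModule) f 0 (2*PI) v M).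
  pose proof PI_RGT_0; lra. intros. rewrite norm_C. auto. auto. Qed.

Lemma vanish e a g u M : good e -> (Cmod a < 1)%R -> Cont g -> Cont u ->
  (forall t, Cmod (g t) <= M)%R -> (forall t, g t = u t + a * e t * g t) ->
  (forall m, (1 <= m)%nat -> IC (fun t => e t ^ m * u t) 0) ->
  forall m, (1 <= m)%nat -> IC (fun t => e t ^ m * g t) 0.
Proof. intros [He1 [Hec _]] Ha Hg Hu HM Hrel Hum.
  set (I := fun k => (RInt (V:=C_R_CompleteNormedModule) (fun t => e t ^ k * g t) 0 (2*PI) : C)).
  assert (HI : forall k, IC (fun t => e t ^ k * g t) (I k)).
  { intros k. apply RInt_correct. apply cont_ex. apply cont_mult; auto. apply cont_pow; auto. }
  assert (Hrec : forall k, (1 <= k)%nat -> I k = a * I (S k)).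
  { intros k Hk. apply (IC_unique (fun t => e t ^ k * g t)); auto.
    eapply IC_eqv; [|eapply IC_ext; [|apply (IC_plus _ _ _ _ (Hum k Hk) (IC_scal a _ _ (HI (S k))))]].
    - apply Cplus_0_l.
    - intros t. simpl. transitivity (e t ^ k * (u t + a * e t * g t)); [ring | now rewrite <- Hrel]. }
  assert (Hit : forall N k, (1 <= k)%nat -> I k = a ^ N * I (k + N)%nat).
  { induction N; intros k Hk. simpl. rewrite Nat.add_0_r. ring.
    rewrite IHN by auto. rewrite (Hrec (k + N)%nat) by lia. simpl.
    replace (k + S N)%nat with (S (k + N)) by lia. ring. }
  assert (Hb : forall k, (Cmod (I k) <= 2 * PI * M)%R).
  { intros k. apply (IC_bound (fun t => e t ^ k * g t) _ M); [|apply HI]. intros t.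
    rewrite Cmod_mult, Cmod_pow, He1, pow1, Rmult_1_l. auto. }
  intros m Hm. assert (E : I m = 0).
  { apply Cmod_eq_0. apply (small_zero _ (Cmod a) (2 * PI * M)).
    apply Cmod_ge_0. split; auto. apply Cmod_ge_0.
    intros N. rewrite (Hit N m Hm), Cmod_mult, Cmod_pow.
    apply Rmult_le_compat_l. apply pow_le, Cmod_ge_0. apply Hb. }
  rewrite <- E. apply HI.
Qed.

Lemma IC_ext' f g v : IC f v -> (forall t, f t = g t) -> IC g v.
Proof. intros; eapply IC_ext; eauto. Qed.
Lemma IC_eqv' f v w : IC f v -> v = w -> IC f w.
Proof. intros H ->; auto. Qed.

Definition g1 (e : R -> C) a t := / (1 - a * e t).
Definition g2 (e : R -> C) a b t := / ((1 - a * e t) * (1 - b * e t)).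

Lemma den_nz (a x : C) : (Cmod a < 1)%R -> Cmod x = 1%R -> 1 - a * x <> 0.
Proof. intros Ha Hx E. assert (E' : a * x = 1). { rewrite <- (Cplus_0_l (a*x)), <- E. ring. }
  apply (f_equal Cmod) in E'. rewrite Cmod_mult, Hx, Cmod_1 in E'. lra. Qed.

Lemma den_ge (a x : C) : (Cmod a < 1)%R -> Cmod x = 1%R -> (1 - Cmod a <= Cmod (1 - a * x))%R.
Proof. intros Ha Hx. pose proof (Cmod_triangle (1 - a * x) (a * x)) as T.
  replace (1 - a * x + a * x) with (RtoC 1) in T by ring.
  rewrite Cmod_1, Cmod_mult, Hx in T. lra. Qed.

Lemma inv_bound (a x : C) : (Cmod a < 1)%R -> Cmod x = 1%R -> (Cmod (/ (1 - a * x)) <= / (1 - Cmod a))%R.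
Proof. intros Ha Hx. rewrite Cmod_inv by (apply den_nz; auto).
  apply Rinv_le_contravar. lra. apply den_ge; auto. Qed.

Lemma e_nz e t : good e -> e t <> 0.
Proof. intros [H _] E. specialize (H t). rewrite E, Cmod_0 in H. lra. Qed.

Lemma cont_g1 e a : good e -> (Cmod a < 1)%R -> Cont (g1 e a).
Proof. intros He Ha. unfold g1. apply cont_inv.
  apply cont_minus. apply cont_const. apply cont_mult. apply cont_const. apply He.
  intros t. apply den_nz; auto. apply He. Qed.

Lemma cont_g2 e a b : good e -> (Cmod a < 1)%R -> (Cmod b < 1)%R -> Cont (g2 e a b).
Proof. intros He Ha Hb. unfold g2. apply cont_inv.
  apply cont_mult; apply cont_minus; try apply cont_const; apply cont_mult; try apply cont_const; apply He.
  intros t. apply Cmult_neq_0; apply den_nz; auto; apply He. Qed.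

Lemma van1 e a : good e -> (Cmod a < 1)%R ->
  forall m, (1 <= m)%nat -> IC (fun t => e t ^ m * g1 e a t) 0.
Proof. intros He Ha. apply (vanish e a (g1 e a) (fun _ => 1) (/ (1 - Cmod a))); auto.
  - apply cont_g1; auto.
  - apply cont_const.
  - intros t. apply inv_bound; auto. apply He.
  - intros t. unfold g1. field. apply den_nz; auto. apply He.
  - intros m Hm. eapply IC_ext'. apply (proj1 (proj2 (proj2 He)) m Hm). intros; simpl; ring.
Qed.

Lemma neg1 e a : good e -> (Cmod a < 1)%R ->
  forall m, IC (fun t => (/ e t) ^ m * g1 e a t) (RtoC (2 * PI) * a ^ m).
Proof. intros He Ha. induction m.
  - eapply IC_eqv'. eapply IC_ext'. apply (IC_plus _ _ _ _ (IC_const 1) (IC_scal a _ _ (van1 e a He Ha 1 (le_n 1)))).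
    + intros t. simpl. unfold g1. field. apply den_nz; auto. apply He.
    + simpl. ring.
  - eapply IC_eqv'. eapply IC_ext'. apply (IC_plus _ _ _ _ (proj2 (proj2 (proj2 He)) (S m) ltac:(lia)) (IC_scal a _ _ IHm)).
    + intros t. simpl. unfold g1. field. split. apply den_nz; auto. apply He. apply e_nz; auto.
    + simpl. ring.
Qed.

Lemma g2_eq e a b t : good e -> (Cmod a < 1)%R -> (Cmod b < 1)%R -> g2 e a b t = g1 e a t * g1 e b t.
Proof. intros He Ha Hb. unfold g1, g2. field. split; apply den_nz; auto; apply He. Qed.

Lemma van2 e a b : good e -> (Cmod a < 1)%R -> (Cmod b < 1)%R ->
  forall m, (1 <= m)%nat -> IC (fun t => e t ^ m * g2 e a b t) 0.
Proof. intros He Ha Hb. apply (vanish e a (g2 e a b) (g1 e b) (/ (1 - Cmod a) * / (1 - Cmod b))); auto.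
  - apply cont_g2; auto.
  - apply cont_g1; auto.
  - intros t. rewrite g2_eq by auto. rewrite Cmod_mult. unfold g1.
    apply Rmult_le_compat; try apply Cmod_ge_0; apply inv_bound; auto; apply He.
  - intros t. unfold g1, g2. field. split; apply den_nz; auto; apply He.
  - apply van1; auto.
Qed.

Fixpoint Sab (a b : C) (m : nat) : C :=
  match m with O => 1 | S k => b ^ (S k) + a * Sab a b k end.

Lemma neg2 e a b : good e -> (Cmod a < 1)%R -> (Cmod b < 1)%R ->
  forall m, IC (fun t => (/ e t) ^ m * g2 e a b t) (RtoC (2 * PI) * Sab a b m).
Proof. intros He Ha Hb. induction m.
  - eapply IC_eqv'. eapply IC_ext'. apply (IC_plus _ _ _ _ (neg1 e b He Hb 0) (IC_scal a _ _ (van2 e a b He Ha Hb 1 (le_n 1)))).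
    + intros t. simpl. unfold g1, g2. field. split; apply den_nz; auto; apply He.
    + simpl. ring.
  - eapply IC_eqv'. eapply IC_ext'. apply (IC_plus _ _ _ _ (neg1 e b He Hb (S m)) (IC_scal a _ _ IHm)).
    + intros t. simpl. unfold g1, g2. field. repeat split; try apply den_nz; auto; try apply He; apply e_nz; auto.
    + simpl. ring.
Qed.

Lemma Cconj_1 : Cconj 1 = 1.
Proof. unfold Cconj. simpl. rewrite Ropp_0. reflexivity. Qed.

Lemma Cinv_inv' (x : C) : x <> 0 -> / / x = x.
Proof. intros H. field. auto. Qed.

Lemma good_circ : good circ.
Proof. split; [|split; [|split]].
  - apply circ_mod.
  - apply cont_circ.
  - apply int_pos.
  - apply int_neg.
Qed.

Lemma good_icirc : good (fun t => / circ t).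
Proof. split; [|split; [|split]].
  - intros t. rewrite Cmod_inv by apply circ_nz. rewrite circ_mod. apply Rinv_1.
  - apply cont_inv. apply cont_circ. apply circ_nz.
  - apply int_neg.
  - intros m Hm. eapply IC_ext'. apply (int_pos m Hm). intros t. rewrite Cinv_inv'; auto. apply circ_nz.
Qed.

Lemma conj_circ t : Cconj (circ t) = / circ t.
Proof. rewrite circ_inv. unfold Cconj, circ; simpl. rewrite cos_neg, sin_neg. reflexivity. Qed.

Lemma mod_lt_neq (z a : C) : Cmod z = 1%R -> (Cmod a < 1)%R -> z - a <> 0.
Proof. intros Hz Ha E. assert (z = a). { rewrite <- (Cplus_0_l a), <- E. ring. }
  subst. lra. Qed.

Lemma dens_C a b z : (Cmod a < 1)%R -> (Cmod b < 1)%R -> Cmod z = 1%R ->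
  RtoC (dens a b z) =
  / RtoC (2 * PI)%R * ((1 - a * Cconj b) * (1 - Cconj a * b) / (1 - a * Cconj a * b * Cconj b)) *
  ((1 - a * Cconj a) / ((z - a) * (Cconj z - Cconj a))) *
  ((1 - b * Cconj b) / ((z - b) * (Cconj z - Cconj b))).
Proof. intros Ha Hb Hz.
  assert (H1 : (1 - Cmod (a * Cconj b) ^ 2)%R <> 0%R).
  { rewrite Cmod_mult, Cmod_conj. assert (0 <= Cmod a)%R by apply Cmod_ge_0.
    assert (0 <= Cmod b)%R by apply Cmod_ge_0. intro E. assert (Hab : (Cmod a * Cmod b < 1)%R) by (clear - Ha Hb H H0; nra). assert (Hp : (0 <= Cmod a * Cmod b)%R) by (apply Rmult_le_pos; auto). clear - E Hab Hp. revert E Hab Hp. generalize (Cmod a * Cmod b)%R. intros p E Hab Hp. simpl in E. nra. }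
  assert (H2 : forall c : C, c <> RtoC 0 -> (Cmod c ^ 2)%R <> 0%R).
  { intros c Hc. apply pow_nonzero. intro E. apply Hc. apply Cmod_eq_0; auto. }
  assert (Hza := mod_lt_neq z a Hz Ha). assert (Hzb := mod_lt_neq z b Hz Hb).
  unfold dens. rewrite !RtoC_mult, !RtoC_div by auto.
  rewrite RtoC_inv by (pose proof PI_RGT_0; lra).
  rewrite !RtoC_minus, !Cmod2_conj.
  rewrite !Cminus_conj, !Cmult_conj, !Cconj_conj, !Cconj_1.
  replace (1 - a * Cconj b * (Cconj a * b)) with (1 - a * Cconj a * b * Cconj b) by ring. rewrite ?RtoC_mult. reflexivity.
Qed.

Lemma one_minus_nz (c : C) : (Cmod c < 1)%R -> 1 - c <> 0.
Proof. intros H E. assert (c = 1). { rewrite <- (Cplus_0_l c), <- E. ring. } subst. rewrite Cmod_1 in H. lra. Qed.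

Lemma mod_prod_lt (x y : C) : (Cmod x < 1)%R -> (Cmod y < 1)%R -> (Cmod (x * y) < 1)%R.
Proof. intros Hx Hy. rewrite Cmod_mult. pose proof (Cmod_ge_0 x). pose proof (Cmod_ge_0 y). nra. Qed.

Definition Kc (a b : C) := (1 - a * Cconj b) * (1 - Cconj a * b) / (1 - a * Cconj a * b * Cconj b).

Lemma pointwise a b n t : (Cmod a < 1)%R -> (Cmod b < 1)%R ->
  moment_integrand a b n t =
  Kc a b / RtoC (2 * PI)%R * ((/ (/ circ t)) ^ n * g2 (fun t => / circ t) a b t)
  + Kc a b / RtoC (2 * PI)%R * (Cconj b / (1 - a * Cconj b)) *
     ((/ (/ circ t)) ^ S n * g1 (fun t => / circ t) a t + Cconj b * (circ t ^ S (S n) * g1 circ (Cconj b) t))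
  + Kc a b / RtoC (2 * PI)%R * (Cconj a / (1 - Cconj a * b)) *
     ((/ (/ circ t)) ^ S n * g1 (fun t => / circ t) b t + Cconj a * (circ t ^ S (S n) * g1 circ (Cconj a) t))
  + Kc a b / RtoC (2 * PI)%R * (Cconj a * Cconj b) * (circ t ^ S (S n) * g2 circ (Cconj a) (Cconj b) t).
Proof. intros Ha Hb.
  assert (Ha' : (Cmod (Cconj a) < 1)%R) by (rewrite Cmod_conj; auto).
  assert (Hb' : (Cmod (Cconj b) < 1)%R) by (rewrite Cmod_conj; auto).
  unfold moment_integrand. rewrite dens_C by (auto; apply circ_mod).
  rewrite conj_circ. unfold g1, g2, Kc.
  rewrite Cinv_inv' by apply circ_nz.
  pose proof (circ_nz t) as Hz. pose proof (mod_lt_neq _ _ (circ_mod t) Ha) as Hza.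
  pose proof (mod_lt_neq _ _ (circ_mod t) Hb) as Hzb.
  assert (Hiz : Cmod (/ circ t) = 1%R) by (rewrite Cmod_inv, circ_mod; [apply Rinv_1|apply circ_nz]).
  pose proof (den_nz _ _ Ha Hiz). pose proof (den_nz _ _ Hb Hiz).
  pose proof (den_nz _ _ Ha' (circ_mod t)). pose proof (den_nz _ _ Hb' (circ_mod t)).
  pose proof (one_minus_nz _ (mod_prod_lt _ _ Ha Hb')).
  pose proof (one_minus_nz _ (mod_prod_lt _ _ Ha' Hb)).
  assert (H5 : 1 - a * Cconj a * b * Cconj b <> 0).
  { replace (a * Cconj a * b * Cconj b) with (a * Cconj a * (b * Cconj b)) by ring.
    apply (one_minus_nz _ (mod_prod_lt _ _ (mod_prod_lt _ _ Ha Ha') (mod_prod_lt _ _ Hb Hb'))). }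
  assert (HP : RtoC (2 * PI)%R <> 0). { intro E. apply RtoC_inj in E. pose proof PI_RGT_0. lra. }
  simpl Cpow. set (z := circ t). set (Zn := z ^ n). 
  field. repeat split; cbv beta; auto.
Qed.

Lemma general a b n : (Cmod a < 1)%R -> (Cmod b < 1)%R ->
  IC (moment_integrand a b n)
    (Kc a b * (Sab a b n + Cconj b * a ^ S n / (1 - a * Cconj b) + Cconj a * b ^ S n / (1 - Cconj a * b))).
Proof. intros Ha Hb.
  assert (Ha' : (Cmod (Cconj a) < 1)%R) by (rewrite Cmod_conj; auto).
  assert (Hb' : (Cmod (Cconj b) < 1)%R) by (rewrite Cmod_conj; auto).
  pose proof (neg2 _ a b good_icirc Ha Hb n) as H1.
  pose proof (neg1 _ a good_icirc Ha (S n)) as H2a.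
  pose proof (van1 _ (Cconj b) good_circ Hb' (S (S n)) ltac:(lia)) as H2b.
  pose proof (neg1 _ b good_icirc Hb (S n)) as H3a.
  pose proof (van1 _ (Cconj a) good_circ Ha' (S (S n)) ltac:(lia)) as H3b.
  pose proof (van2 _ (Cconj a) (Cconj b) good_circ Ha' Hb' (S (S n)) ltac:(lia)) as H4.
  set (c := Kc a b / RtoC (2 * PI)%R).
  pose proof (IC_plus _ _ _ _ (IC_plus _ _ _ _ (IC_plus _ _ _ _
     (IC_scal c _ _ H1)
     (IC_scal (c * (Cconj b / (1 - a * Cconj b))) _ _ (IC_plus _ _ _ _ H2a (IC_scal (Cconj b) _ _ H2b))))
     (IC_scal (c * (Cconj a / (1 - Cconj a * b))) _ _ (IC_plus _ _ _ _ H3a (IC_scal (Cconj a) _ _ H3b))))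
     (IC_scal (c * (Cconj a * Cconj b)) _ _ H4)) as H.
  eapply IC_eqv'. eapply IC_ext'. apply H.
  - intros t. symmetry. rewrite pointwise by auto. reflexivity.
  - unfold c. assert (HP : RtoC (2 * PI)%R <> 0). { intro E. apply RtoC_inj in E. pose proof PI_RGT_0. lra. }
    pose proof (one_minus_nz _ (mod_prod_lt _ _ Ha Hb')).
    pose proof (one_minus_nz _ (mod_prod_lt _ _ Ha' Hb)).
    field. auto.
Qed.

Lemma Sab_neq a b n : a <> b -> Sab a b n = (a ^ S n - b ^ S n) / (a - b).
Proof. intros H. assert (H' : a - b <> 0) by (apply Cminus_eq_contra; auto).
  induction n.
  - simpl. field. auto.
  - simpl Sab. rewrite IHn. simpl. field. auto. Qed.

Lemma Sab_eq a n : Sab a a n = RtoC (INR (S n)) * a ^ n.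
Proof. induction n.
  - simpl. ring.
  - simpl Sab. rewrite IHn. rewrite (S_INR (S n)), RtoC_plus. simpl. ring. Qed.

Theorem theorem4 (phi1 phi2 : C) (n : nat) :
  (Cmod phi1 < 1)%R -> (Cmod phi2 < 1)%R ->
  (phi1 <> phi2 ->
   is_RInt (V := C_R_CompleteNormedModule) (moment_integrand phi1 phi2 n) 0 (2 * PI)
     (( RtoC (1 - (Cmod phi2) ^ 2) * (1 - Cconj phi1 * phi2) * phi1 ^ (n + 1)
      - RtoC (1 - (Cmod phi1) ^ 2) * (1 - phi1 * Cconj phi2) * phi2 ^ (n + 1))
      / ((phi1 - phi2) * RtoC (1 - (Cmod (phi1 * Cconj phi2)) ^ 2)))) /\
  (phi1 = phi2 ->
   is_RInt (V := C_R_CompleteNormedModule) (moment_integrand phi1 phi2 n) 0 (2 * PI)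
     (RtoC ((1 + INR n + (1 - INR n) * (Cmod phi1) ^ 2) / (1 + (Cmod phi1) ^ 2))
      * phi1 ^ n)).
Proof. intros Ha Hb.
  set (a := phi1) in *. set (b := phi2) in *.
  assert (Ha' : (Cmod (Cconj a) < 1)%R) by (rewrite Cmod_conj; auto).
  assert (Hb' : (Cmod (Cconj b) < 1)%R) by (rewrite Cmod_conj; auto).
  pose proof (one_minus_nz _ (mod_prod_lt _ _ Ha Hb')) as N1.
  pose proof (one_minus_nz _ (mod_prod_lt _ _ Ha' Hb)) as N2.
  assert (N3 : 1 - a * Cconj a * b * Cconj b <> 0).
  { replace (a * Cconj a * b * Cconj b) with (a * Cconj a * (b * Cconj b)) by ring.
    apply (one_minus_nz _ (mod_prod_lt _ _ (mod_prod_lt _ _ Ha Ha') (mod_prod_lt _ _ Hb Hb'))). }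
  split.
  - intros Hab. eapply IC_eqv'. apply general; auto.
    rewrite Sab_neq by auto. unfold Kc.
    assert (H' : a - b <> 0) by (apply Cminus_eq_contra; auto).
    rewrite !RtoC_minus, !Cmod2_conj, Cmult_conj, Cconj_conj, !Nat.add_1_r.
    field. repeat split; auto.
    replace (1 - a * Cconj b * (Cconj a * b)) with (1 - a * Cconj a * b * Cconj b) by ring. auto.
  - intros Hab. rewrite <- Hab. eapply IC_eqv'. apply general; auto.
    rewrite Sab_eq. unfold Kc.
    assert (P : (1 + Cmod a ^ 2)%R <> 0%R) by (pose proof (pow2_ge_0 (Cmod a)); lra).
    assert (P' : 1 + a * Cconj a <> 0).
    { rewrite <- Cmod2_conj. intro E. apply P. rewrite <- RtoC_plus in E. apply RtoC_inj in E. auto. }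
    rewrite RtoC_div by auto. rewrite !RtoC_plus, !RtoC_mult, !RtoC_minus, !Cmod2_conj.
    rewrite (S_INR n), RtoC_plus. simpl Cpow.
    rewrite <- Hab in N1, N3. field. repeat split; auto. replace (Cconj a * a) with (a * Cconj a) by ring. auto.
Qed.
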